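(* Let $D\in(0,1]$ and define $\mathcal F_{\bm B}:=\{r_2\in[\underline x,\bar x]:(\bm R\bm c^m)^\top G_{\bm B}(r_2)\le D\}$, $\mathcal F_{\bm A}:=\{(r_1,r_3,p)\in F:(\bm R\bm c^m)^\top G_{\bm A}(r_1,r_3,p)\le D\}$, $\vartheta_{\bm B}:=\max\{(\bm R\bm v_1^m)^\top G_{\bm B}(r_2):r_2\in\mathcal F_{\bm B}\}$, $\vartheta_{\bm A}:=\max\{(\bm R\bm v_2^m)^\top G_{\bm A}(r_1,r_3,p):(r_1,r_3,p)\in\mathcal F_{\bm A}\}$, $\mathcal S_{\bm B}:=\{r_2\in\mathcal F_{\bm B}:(\bm R\bm v_1^m)^\top G_{\bm B}(r_2)=\vartheta_{\bm B}\}$, $\mathcal S_{\bm A}:=\{(r_1,r_3,p)\in\mathcal F_{\bm A}:(\bm R\bm v_2^m)^\top G_{\bm A}(r_1,r_3,p)=\vartheta_{\bm A}\}$, $\mathcal F_{\bm B}^{=}:=\{r_2\in[\underline x,\bar x]:(\bm R\bm c^m)^\top G_{\bm B}(r_2)=D\}$ and $\mathcal F_{\bm A}^{=}:=\{(r_1,r_3,p)\in F:(\bm R\bm c^m)^\top G_{\bm A}(r_1,r_3,p)=D\}$. Then for every $(r_1^m,r_3^m,p^m)\in\mathcal S_{\bm A}\cap\mathcal F_{\bm A}^{=}$ and every $r_2^m\in\mathcal S_{\bm B}\cap\mathcal F_{\bm B}^{=}$ we have $r_1^m\le r_2^m\le r_3^m$.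
   Context: Let $N\ge3$ be an integer and $\underline x=x_1<x_2<\cdots<x_N=\bar x$ real numbers; $\bm e$ denotes the all-ones vector of the appropriate dimension. Define $\bm g:[\underline x,\bar x]\to\mathbb R^{N-1}$ by $\bm g(x_1)=\bm 0$ and, for $x\in(x_i,x_{i+1}]$ ($i\in\{1,\dots,N-1\}$), $\bm g(x)=(1,\dots,1,\frac{x-x_i}{x_{i+1}-x_i},0,\dots,0)$ with the first $i-1$ entries equal to $1$, the $i$-th entry $\frac{x-x_i}{x_{i+1}-x_i}$ and the last $N-1-i$ entries $0$. For $\bm v\in\mathbb R^{N-2}$ let $\bm R\bm v:=(v_1,\dots,v_{N-2},1-\bm e^\top\bm v)\in\mathbb R^{N-1}$. Define $G_{\bm A}(r_1,r_3,p):=(1-p)\bm g(r_1)+p\,\bm g(r_3)$, $G_{\bm B}(r_2):=\bm g(r_2)$, and $F:=\{(r_1,r_3,p)\in[\underline x,\bar x]\times[\underline x,\bar x]\times[0,1]: r_1\le r_3\}$. Fix $m\ge1$ and data $(r_1^k,r_3^k,p^k)\in F$, $r_2^k\in[\underline x,\bar x]$, $l_k\in\{-1,1\}$ for $k=1,\dots,m-1$. Let $\mathcal V^{m-1}:=\{\bm v\in\mathbb R^{N-2}: v_i\ge0\ (i=1,\dots,N-2),\ \bm e^\top\bm v\le1,\ l_k(\bm R\bm v)^\top(G_{\bm A}(r_1^k,r_3^k,p^k)-G_{\bm B}(r_2^k))\le0\ (k=1,\dots,m-1)\}$, assumed to have nonempty interior; write its defining inequalities as $\tilde{\bm a}_i^\top\bm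 v\le\tilde b_i$. Let $\bm c^m$ be its analytic center, i.e. the maximizer over the interior of $\mathcal V^{m-1}$ of $\sum_i\log(\tilde b_i-\tilde{\bm a}_i^\top\bm v)$; in particular $c^m_i>0$ for all $i$ and $1-\bm e^\top\bm c^m>0$. Let $\bm H:=\sum_i\tilde{\bm a}_i\tilde{\bm a}_i^\top/(\tilde b_i-\tilde{\bm a}_i^\top\bm c^m)^2$ (Sonnevend's inner ellipsoid is $\{\bm v:(\bm v-\bm c^m)^\top\bm H(\bm v-\bm c^m)\le1\}$), and let $\bm v_1^m,\bm v_2^m\in\mathcal V^{m-1}$ be the two points (in some fixed order) where the line through $\bm c^m$ in the direction of the longest axis of this ellipsoid meets the boundary of $\mathcal V^{m-1}$. *)

(* Defs.v *)
From HB Require Import structures.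
From mathcomp Require Import all_boot all_order all_algebra.
From mathcomp Require Import all_classical all_reals all_analysis.
Set Implicit Arguments. Unset Strict Implicit. Unset Printing Implicit Defensive.
Import Order.TTheory GRing.Theory Num.Theory.
Local Open Scope ring_scope.

(* Conventions: N = n.+2 (so N >= 3 iff 0 < n); the grid points
   x_1 < ... < x_N are [xs : 'I_n.+2 -> R] (0-indexed);
   vectors of R^(N-1) are ['I_n.+1 -> R], vectors of R^(N-2) are ['I_n -> R];
   m - 1 = k, the past data are indexed by ['I_k]. *)

Section Defs.
Variable R : realType.
Variable n : nat.
Variable xs : 'I_n.+2 -> R.

Definition xlo : R := xs ord0.
Definition xhi : R := xs ord_max.

(* This is the paper's
   piecewise definition written entrywise (g(x_1) = 0 included). *)
Definition gfun (x : R) (j : 'I_n.+1) : R :=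
  let a := xs (widen_ord (leqnSn n.+1) j) in
  let b := xs (lift ord0 j) in
  if x <= a then 0 else if b <= x then 1 else (x - a) / (b - a).

Definition Rop (v : 'I_n -> R) (j : 'I_n.+1) : R :=
  if unlift ord_max j is Some j' then v j' else 1 - \sum_i v i.

Definition dot (u w : 'I_n.+1 -> R) : R := \sum_j u j * w j.
Definition dotn (u w : 'I_n -> R) : R := \sum_j u j * w j.

Definition GA (r1 r3 p : R) (j : 'I_n.+1) : R :=
  (1 - p) * gfun r1 j + p * gfun r3 j.
Definition GB (r2 : R) (j : 'I_n.+1) : R := gfun r2 j.

Definition inI (x : R) : Prop := xlo <= x <= xhi.
Definition inF (r1 r3 p : R) : Prop :=
  [/\ inI r1, inI r3, 0 <= p <= 1 & r1 <= r3].

Variable k : nat.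
Variables (r1d r3d pd r2d ld : 'I_k -> R).

Definition wdat (q : 'I_k) (j : 'I_n.+1) : R :=
  GA (r1d q) (r3d q) (pd q) j - GB (r2d q) j.

Definition inV (v : 'I_n -> R) : Prop :=
  [/\ forall i, 0 <= v i, \sum_i v i <= 1 &
      forall q, ld q * dot (Rop v) (wdat q) <= 0].

(* its defining inequalities  atil t ^T v <= btil t, indexed by
   'I_n (v_i >= 0), unit (e^T v <= 1), 'I_k (data constraints).
   Since (R v)^T w = w_N + sum_j v_j (w_j - w_N), the data constraint
   l (R v)^T w <= 0 reads  (l (w_j - w_N))_j ^T v <= - l w_N. *)
Definition Idx : finType := ('I_n + (unit + 'I_k))%type.

Definition atil (t : Idx) : 'I_n -> R :=
  match t with
  | inl i => fun j => - (i == j)%:R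
  | inr (inl _) => fun _ => 1
  | inr (inr q) => fun j =>
      ld q * (wdat q (widen_ord (leqnSn n) j) - wdat q ord_max)
  end.

Definition btil (t : Idx) : R :=
  match t with
  | inl _ => 0
  | inr (inl _) => 1
  | inr (inr q) => - (ld q * wdat q ord_max)
  end.

Definition slack (t : Idx) (v : 'I_n -> R) : R := btil t - dotn (atil t) v.

Definition inVint (v : 'I_n -> R) : Prop := forall t, 0 < slack t v.

Definition barrier (v : 'I_n -> R) : R := \sum_t ln (slack t v).

Definition analytic_center (c : 'I_n -> R) : Prop :=
  inVint c /\ forall v, inVint v -> barrier v <= barrier c.

Definition Hmat (c : 'I_n -> R) (i j : 'I_n) : R :=
  \sum_t atil t i * atil t j / (slack t c) ^+ 2.

Definition eigenpair (H : 'I_n -> 'I_n -> R) (mu : R) (u : 'I_n -> R) : Prop :=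
  (exists j, u j != 0) /\ forall i, \sum_j H i j * u j = mu * u i.

(* d spans the longest axis of {v : (v-c)^T H (v-c) <= 1}: an eigenvector
   of H for its smallest eigenvalue (semi-axis lengths are 1/sqrt(eig)). *)
Definition longest_axis_dir (c d : 'I_n -> R) : Prop :=
  exists lam, eigenpair (Hmat c) lam d /\
    forall mu u, eigenpair (Hmat c) mu u -> lam <= mu.

Definition line_pt (c d : 'I_n -> R) (t : R) (i : 'I_n) : R := c i + t * d i.

Definition boundary_pts (c d v1 v2 : 'I_n -> R) : Prop :=
  exists t1 t2, (forall t, inV (line_pt c d t) <-> t1 <= t <= t2) /\
    ((forall i, v1 i = line_pt c d t1 i /\ v2 i = line_pt c d t2 i) \/
     (forall i, v1 i = line_pt c d t2 i /\ v2 i = line_pt c d t1 i)).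

End Defs.

(* Main.v *)
Require Import Defs.
From HB Require Import structures.
From mathcomp Require Import all_boot all_order all_algebra.
From mathcomp Require Import all_classical all_reals all_analysis.
From mathcomp Require Import ring lra.
Import Order.TTheory GRing.Theory Num.Theory.
Local Open Scope ring_scope.

Lemma nat_step (P : pred nat) (N : nat) :
  P 0 -> ~~ P N -> exists m, (m < N)%N /\ P m /\ ~~ P m.+1.
Proof.
elim: N => [|N IH] P0 PN; first by rewrite P0 in PN.
case HN: (P N); first by exists N; rewrite ltnSn HN PN.
have [m [Hm [Pm Pm1]]] := IH P0 (negbT HN).
by exists m; split => //; apply: ltnW.
Qed.

Section Mono.
Variables (R : realType) (n : nat) (xs : 'I_n.+2 -> R).
Hypothesis xs_inc : forall i j : 'I_n.+2, (i < j)%N -> xs i < xs j.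

Lemma ab_lt (j : 'I_n.+1) :
  xs (widen_ord (leqnSn n.+1) j) < xs (lift ord0 j).
Proof. by apply: xs_inc => /=; rewrite /bump /= add1n. Qed.

Lemma gfun_mono (x y : R) j : x <= y -> gfun xs x j <= gfun xs y j.
Proof.
move=> xy; have ab := ab_lt j; rewrite /gfun.
set a := xs _ in ab *; set b := xs _ in ab *.
have ba : 0 < b - a by rewrite subr_gt0.
case: ifP => ha.
  case: ifP => hya; first by [].
  case: ifP => hyb; first by [].
  apply: divr_ge0; last exact: ltW.
  by move/negbT: hya; rewrite -ltNge subr_ge0 => /ltW.
case: ifP => hxb.
  have hya : (y <= a) = false by apply/negbTE; rewrite -ltNge; apply: lt_le_trans xy; rewrite ltNge ha.
  by rewrite hya (le_trans hxb xy).
have hya : (y <= a) = false by apply/negbTE; rewrite -ltNge; apply: lt_le_trans xy; rewrite ltNge ha.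
rewrite hya; case: ifP => hyb.
  rewrite ler_pdivrMr // mul1r; move/negbT: hxb; rewrite -ltNge => /ltW; lra.
by rewrite ler_pM2r ?invr_gt0 // lerD2r.
Qed.

Lemma gfun_strict (x y : R) : xs ord0 <= y -> y < x -> x <= xs ord_max ->
  exists j, gfun xs y j < gfun xs x j.
Proof.
move=> hy yx hx.
pose P := fun m : nat => xs (inord m) < x.
have P0 : P 0%N by rewrite /P (_ : inord 0 = ord0); [exact: le_lt_trans yx|apply: val_inj; rewrite /= inordK].
have PN : ~~ P n.+1.
  rewrite /P -leNgt (_ : inord n.+1 = ord_max) //; apply: val_inj; rewrite /= inordK //.
have [m [Hm [Pm Pm1]]] := @nat_step P n.+1 P0 PN.
exists (inord m).
have ea : widen_ord (leqnSn n.+1) (inord m : 'I_n.+1) = inord m.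
  by apply: val_inj; rewrite /= !inordK // ltnW.
have eb : lift ord0 (inord m : 'I_n.+1) = inord m.+1.
  by apply: val_inj; rewrite /= /bump /= add1n !inordK // ltnW.
have ab := ab_lt (inord m).
rewrite /gfun; rewrite ea eb in ab *.
rewrite /P -leNgt in Pm1.
set a := xs (inord m) in Pm Pm1 ab *; set b := xs (inord m.+1) in Pm Pm1 ab *.
have ba : 0 < b - a by rewrite subr_gt0.
have hxa : (x <= a) = false by apply/negbTE; rewrite -ltNge.
rewrite hxa.
have hyb : (b <= y) = false by apply/negbTE; rewrite -ltNge; apply: lt_le_trans yx Pm1.
rewrite hyb.
case: ifP => hya.
  case: ifP => hxb; first by [].
  by apply: divr_gt0; rewrite ?subr_gt0.
case: ifP => hxb.
  rewrite ltr_pdivrMr // mul1r; lra.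
by rewrite ltr_pM2r ?invr_gt0 // ltrD2r.
Qed.

Variable w : 'I_n.+1 -> R.
Hypothesis wpos : forall j, 0 < w j.

Lemma phi_mono x y : x <= y -> dot w (GB xs x) <= dot w (GB xs y).
Proof.
move=> xy; rewrite /dot /GB; apply: ler_sum => j _.
by rewrite ler_pM2l // gfun_mono.
Qed.

Lemma phi_strict x y : xs ord0 <= y -> y < x -> x <= xs ord_max ->
  dot w (GB xs y) < dot w (GB xs x).
Proof.
move=> hy yx hx; have [j hj] := gfun_strict x y hy yx hx.
rewrite /dot /GB (bigD1 j) //= [X in _ < X](bigD1 j) //=.
apply: ltr_leD; first by rewrite ltr_pM2l.
apply: ler_sum => i _; by rewrite ler_pM2l // gfun_mono // ltW.
Qed.

End Mono.

Theorem proposition7 (R : realType) (n : nat) (xs : 'I_n.+2 -> R)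
  (k : nat) (r1d r3d pd r2d ld : 'I_k -> R)
  (c d v1 v2 : 'I_n -> R) (D r1 r3 p r2 : R) :
  (0 < n)%N ->
  (forall i j : 'I_n.+2, (i < j)%N -> xs i < xs j) ->
  (forall q, inF xs (r1d q) (r3d q) (pd q)) ->
  (forall q, inI xs (r2d q)) ->
  (forall q, ld q = 1 \/ ld q = -1) ->
  (exists v, inVint xs r1d r3d pd r2d ld v) ->
  analytic_center xs r1d r3d pd r2d ld c ->
  longest_axis_dir xs r1d r3d pd r2d ld c d ->
  boundary_pts xs r1d r3d pd r2d ld c d v1 v2 ->
  0 < D <= 1 ->
  (* (r1, r3, p) in S_A /\ F_A^= *)
  inF xs r1 r3 p ->
  dot (Rop c) (GA xs r1 r3 p) = D ->
  (forall s1 s3 q, inF xs s1 s3 q -> dot (Rop c) (GA xs s1 s3 q) <= D ->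
     dot (Rop v2) (GA xs s1 s3 q) <= dot (Rop v2) (GA xs r1 r3 p)) ->
  (* r2 in S_B /\ F_B^= *)
  inI xs r2 ->
  dot (Rop c) (GB xs r2) = D ->
  (forall s2, inI xs s2 -> dot (Rop c) (GB xs s2) <= D ->
     dot (Rop v1) (GB xs s2) <= dot (Rop v1) (GB xs r2)) ->
  r1 <= r2 <= r3.
Proof.
move=> _ xs_inc _ _ _ _ [cint _] _ _ _ [hr1 hr3 /andP[p0 p1] r13] hA _ hr2 hB _.
have wpos : forall j, 0 < Rop c j.
  move=> j; rewrite /Rop; case: unliftP => [j' _|_].
    have := cint (inl j'); rewrite /slack /btil /atil /dotn sub0r.
    rewrite (bigD1 j') //= eqxx big1; last first.
      by move=> i /negbTE hi; rewrite eq_sym hi mulr0n oppr0 mul0r.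
    by rewrite addr0 mulr1n mulN1r opprK.
  have := cint (inr (inl tt)); rewrite /slack /btil /atil /dotn.
  by under eq_bigr do rewrite mul1r.
set phi := fun x => dot (Rop c) (GB xs x).
have eA : dot (Rop c) (GA xs r1 r3 p) = (1 - p) * phi r1 + p * phi r3.
  rewrite /phi /dot /GA /GB !mulr_sumr -big_split /=; apply: eq_bigr => j _; ring.
have m13 : phi r1 <= phi r3.
  exact: (@phi_mono _ _ _ xs_inc _ wpos _ _ r13).
case/andP: hr1 => lo1 hi1; case/andP: hr3 => lo3 hi3; case/andP: hr2 => lo2 hi2.
have e2 : phi r2 = (1 - p) * phi r1 + p * phi r3 by rewrite -eA hA; exact: hB.
have s21 : r2 < r1 -> phi r2 < phi r1.
  by move=> lt21; exact: (@phi_strict _ _ _ xs_inc _ wpos _ _ lo2 lt21 hi1).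
have s32 : r3 < r2 -> phi r3 < phi r2.
  by move=> lt32; exact: (@phi_strict _ _ _ xs_inc _ wpos _ _ lo3 lt32 hi2).
clearbody phi.
have h1 : phi r1 <= phi r2.
  rewrite e2 -subr_ge0 (_ : _ - _ = p * (phi r3 - phi r1)); last by ring.
  by apply: mulr_ge0 => //; rewrite subr_ge0.
have h3 : phi r2 <= phi r3.
  rewrite e2 -subr_ge0 (_ : _ - _ = (1 - p) * (phi r3 - phi r1)); last by ring.
  by apply: mulr_ge0; rewrite subr_ge0.
apply/andP; split.
  rewrite leNgt; apply/negP => /s21; by rewrite ltNge h1.
rewrite leNgt; apply/negP => /s32; by rewrite ltNge h3.
Qed.
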